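(* Let $n\in\mathbb{N}=\{0,1,2,\dots\}$, $a,b\in\mathbb{C}$ with $b\notin\mathbb{Z}^-=\{-1,-2,-3,\dots\}$. Then \[ \frac{1}{2n+b+2}\sum_{j=0}^{n}\sum_{i=0}^{j}\frac{\binom{2n+a+2}{i}}{\binom{2n+b+1}{j}} =\sum_{k=0}^{n}\frac{1}{(k+1)\binom{2k+b+2}{k+1}}\left(\binom{2k+a}{k}+\frac{b\sum_{j=0}^{k-1}\binom{2k+a}{j}}{k+b+1}\right). \]
   Context: For $x\in\mathbb{C}$ and $i\in\mathbb{N}$, the binomial coefficient is $\binom{x}{i}=\frac{x(x-1)\cdots(x-i+1)}{i!}$ (with $\binom{x}{0}=1$); in particular for $m,i\in\mathbb{N}$, $\binom{-m}{i}=(-1)^i\binom{m+i-1}{i}$. Empty sums are $0$. *)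

(* Defs.v *)
From HB Require Import structures.
From mathcomp Require Import all_boot all_order all_algebra.
Set Implicit Arguments. Unset Strict Implicit. Unset Printing Implicit Defensive.
Import Order.TTheory GRing.Theory Num.Theory.
Local Open Scope ring_scope.

Definition binomC (R : fieldType) (x : R) (i : nat) : R :=
  (\prod_(j < i) (x - j%:R)) / (i`!)%:R.

(* Main.v *)
Require Import Defs.
From HB Require Import structures.
From mathcomp Require Import all_boot all_order all_algebra.
From mathcomp Require Import ring zify.
From Stdlib Require Import Lia.
Import Order.TTheory GRing.Theory Num.Theory.
Local Open Scope ring_scope.
Set Implicit Arguments. Unset Strict Implicit. Unset Printing Implicit Defensive.

Section Key.
Variable R : comNzRingType.
Variables c c' w : nat -> R.
Hypothesis hc0 : c' 0 = c 0.
Hypothesis hc1 : c' 1 = c 1 + 2 * c 0.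
Hypothesis hc : forall i, c' i.+2 = c i.+2 + 2 * c i.+1 + c i.

Lemma sumS (j : nat) : \sum_(i < j.+2) c' i = 4 * \sum_(i < j.+2) c i - 3 * c j.+1 - c j.
Proof.
elim: j => [|j IH].
  rewrite !big_ord_recr !big_ord0 /= hc0 hc1; ring.
rewrite big_ord_recr /= IH hc [in RHS]big_ord_recr /=; ring.
Qed.

Lemma key (n : nat) :
 \sum_(j < n.+2) (\sum_(i < j.+1) c' i) * w j =
 \sum_(j < n.+1) (\sum_(i < j.+1) c i) * (w j + 2 * w j.+1 + w j.+2)
 + c n.+1 * w n.+1 + (w n.+1 - w n.+2) * \sum_(i < n.+1) c i.
Proof.
elim: n => [|n IH].
  rewrite !big_ord_recr !big_ord0 /= ?big_ord_recr ?big_ord0 /= hc0 hc1; ring.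
rewrite big_ord_recr /= IH sumS [in RHS]big_ord_recr /=.
rewrite !big_ord_recr /=.
set S := \sum_(i < n.+1) c i.
ring.
Qed.
End Key.

Section Bin.
Variable C : numFieldType.

Lemma binC0 (x : C) : binomC x 0 = 1.
Proof. by rewrite /binomC big_ord0 fact0 divr1. Qed.

Lemma binCS (x : C) i : binomC x i.+1 = binomC x i * (x - i%:R) / (i.+1)%:R.
Proof.
rewrite /binomC big_ord_recr /= factS natrM.
have h : (i.+1)%:R != 0 :> C by rewrite pnatr_eq0.
have h2 : (i`!)%:R != 0 :> C by rewrite pnatr_eq0 -lt0n fact_gt0.
field; by rewrite nat1r h h2.
Qed.

Lemma binCS' (x : C) i : binomC x i.+1 * (i.+1)%:R = binomC x i * (x - i%:R).
Proof.
rewrite binCS -mulrA mulVf ?mulr1 //; by rewrite pnatr_eq0.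
Qed.

Lemma pascal (x : C) i : binomC (x + 1) i.+1 = binomC x i.+1 + binomC x i.
Proof.
elim: i => [|i IH].
  by rewrite !binCS !binC0 /=; field.
rewrite binCS IH.
have e := binCS' x i.
rewrite (binCS x i.+1).
apply: (mulIf (x := (i.+2)%:R)); first by rewrite pnatr_eq0.
have -> : x + 1 - i.+1%:R = x - i%:R by rewrite -natr1; ring.
rewrite [X in X / _ * _]mulrDl -e -!natr1; field.
by rewrite !natr1 pnatr_eq0.
Qed.

Lemma binC_shift2 (y : C) j :
  binomC (y + 2) j * ((y + 2 - j%:R) * (y + 1 - j%:R)) = binomC y j * ((y + 2) * (y + 1)).
Proof.
elim: j => [|j IH].
  rewrite !binC0; ring.
rewrite !binCS.
transitivity (binomC (y + 2) j * ((y + 2 - j%:R) * (y + 1 - j%:R)) * (y - j%:R) / (j.+1)%:R).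
  rewrite -!natr1; ring.
rewrite IH -!natr1; ring.
Qed.

Lemma binC_shift1 (x : C) i :
  binomC (x + 1) i * (x + 1 - i%:R) = binomC x i * (x + 1).
Proof.
elim: i => [|i IH].
  rewrite !binC0; ring.
rewrite !binCS.
transitivity (binomC (x + 1) i * (x + 1 - i%:R) * (x - i%:R) / (i.+1)%:R).
  rewrite -!natr1; ring.
rewrite IH -!natr1; ring.
Qed.

Lemma binC_neq0 (x : C) i : (forall t, (t < i)%N -> x - t%:R != 0) -> binomC x i != 0.
Proof.
move=> h; rewrite /binomC mulf_neq0 // ?invr_eq0 ?pnatr_eq0 -?lt0n ?fact_gt0 //.
by apply/prodf_neq0 => t _; apply: h.
Qed.
End Bin.

Section W.
Variable C : numFieldType.
Lemma wrel (Y : C) j (hv : binomC Y j != 0) (h1 : Y - j%:R != 0)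
  (h2 : Y - 1 - j%:R != 0) (hY : Y != 0) (hY1 : Y - 1 != 0) (hY2 : Y + 1 != 0) :
  (Y - 1)^-1 * (binomC (Y - 2) j)^-1 =
  (Y + 1)^-1 * ((binomC Y j)^-1 + 2 * (binomC Y j.+1)^-1 + (binomC Y j.+2)^-1).
Proof.
have hs := binC_shift2 (Y - 2) j; rewrite subrK (_ : Y - 2 + 1 = Y - 1) in hs; last by ring.
have hu : binomC (Y - 2) j = binomC Y j * ((Y - j%:R) * (Y - 1 - j%:R)) / (Y * (Y - 1)).
  apply: (mulIf (x := Y * (Y - 1))); first by rewrite mulf_neq0.
  by rewrite divfK ?mulf_neq0 // -hs.
rewrite hu !binCS -!natr1.
field.
rewrite (_ : Y - (j%:R + 1) = Y - 1 - j%:R); last by ring.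
by rewrite h1 h2 hv hY hY1 hY2 !natr1 !pnatr_eq0.
Qed.
End W.

Section T.
Variable C : numFieldType.
Lemma tlem1 (Y : C) n : (n.+2)%:R * binomC (Y + 1) n.+2 = binomC Y n.+1 * (Y + 1).
Proof. by rewrite mulrC binCS' binC_shift1. Qed.
End T.

Lemma bnz (C : numFieldType) (b : C) (hb : forall m : nat, b <> - (m.+1)%:R) k :
  b + (k.+1)%:R != 0.
Proof. apply/eqP => h; apply: (hb k); apply/eqP; by rewrite -addr_eq0 h. Qed.

Lemma pascal1 (C : numFieldType) (x : C) : binomC (x + 2) 1 = binomC x 1 + 2 * binomC x 0.
Proof. rewrite !binCS !binC0; by field. Qed.

Lemma pascal2 (C : numFieldType) (x : C) i :
  binomC (x + 2) i.+2 = binomC x i.+2 + 2 * binomC x i.+1 + binomC x i.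
Proof.
rewrite (_ : x + 2 = (x + 1) + 1); last by ring.
rewrite !pascal; ring.
Qed.

Lemma tlem2 (C : numFieldType) (Y c S : C) n (hv : binomC Y n.+1 != 0)
  (hY : Y + 1 != 0) (hd : Y - (n.+1)%:R != 0) :
  (Y + 1)^-1 * (c * (binomC Y n.+1)^-1) +
  (Y + 1)^-1 * (((binomC Y n.+1)^-1 - (binomC Y n.+2)^-1) * S) =
  ((n.+2)%:R * binomC (Y + 1) n.+2)^-1 *
  (c + (Y - 2 * (n.+1)%:R - 1) * S / (Y - (n.+1)%:R)).
Proof.
rewrite tlem1 (binCS Y n.+1).
field.
rewrite nat1r hd hY hv (_ : 2 + n%:R = (n.+2)%:R) ?pnatr_eq0 //.
rewrite -!natr1; ring.
Qed.

Unset Implicit Arguments.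

Theorem theorem1 (C : numClosedFieldType) (n : nat) (a b : C)
  (hb : forall m : nat, b <> - (m.+1)%:R) :
  (2 * n%:R + b + 2)^-1 *
    (\sum_(j < n.+1) \sum_(i < j.+1)
        binomC (2 * n%:R + a + 2) i / binomC (2 * n%:R + b + 1) j)
  = \sum_(k < n.+1)
      ((k.+1)%:R * binomC (2 * k%:R + b + 2) k.+1)^-1 *
      (binomC (2 * k%:R + a) k
        + b * (\sum_(j < k) binomC (2 * k%:R + a) j) / (k%:R + b + 1)).
Proof.
elim: n => [|n IH].
  rewrite !big_ord1 /= big_ord0 !binC0 binCS binC0 mulr0.
  by rewrite mulr0 mul0r addr0 add0r subr0 !divr1 !mul1r mulr1.
rewrite [RHS]big_ord_recr /= -IH.
set Y := 2 * (n.+1)%:R + b + 1.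
have eY2 : 2 * (n.+1)%:R + b + 2 = Y + 1 by rewrite /Y; ring.
have eY1 : 2 * n%:R + b + 2 = Y - 1 by rewrite /Y -natr1; ring.
have eY0 : 2 * n%:R + b + 1 = Y - 2 by rewrite /Y -natr1; ring.
have ea : 2 * n%:R + a + 2 = 2 * (n.+1)%:R + a by rewrite -natr1; ring.
have ea2 : 2 * (n.+1)%:R + a + 2 = (2 * (n.+1)%:R + a) + 2 by [].
rewrite eY2 eY1 eY0 ea.
set x := 2 * (n.+1)%:R + a.
have nzY t : (t <= n.*2.+2)%N -> Y - t%:R != 0.
  move=> ht.
  have -> : Y - t%:R = b + ((n.*2.+2 - t).+1)%:R.
    rewrite -subSn // natrB; last by apply: leqW.
    rewrite /Y -!natr1 -addnn natrD; ring.
  exact: bnz.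
have hvY j : (j <= n.+1)%N -> binomC Y j != 0.
  move=> hj; apply: binC_neq0 => t ht; apply: nzY.
  by rewrite -addnn; lia.
under eq_bigr => j _ do rewrite -mulr_suml.
under [X in _ = _ * X + _]eq_bigr => j _ do rewrite -mulr_suml.
have hc0 : binomC (x + 2) 0 = binomC x 0 by rewrite !binC0.
have K := key (c := fun i => binomC x i) (c' := fun i => binomC (x + 2) i)
  (fun j => (binomC Y j)^-1) hc0 (pascal1 x) (pascal2 x) n.
rewrite K.
have hY2 : Y + 1 != 0.
  rewrite (_ : Y + 1 = b + (n.*2.+3).+1%:R); first exact: bnz.
  rewrite /Y -!natr1 -addnn natrD; ring.
have hY0 : Y != 0 by have := nzY 0%N isT; rewrite subr0.
have hY1 : Y - 1 != 0 by have := nzY 1%N isT.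
rewrite mulrDr mulrDr -[in LHS]addrA; congr (_ + _).
  rewrite !mulr_sumr; apply: eq_bigr => -[j hj] _ /=.
  rewrite mulrCA [RHS]mulrCA; congr (_ * _).
  rewrite wrel //.
  - by apply: hvY; lia.
  - by apply: nzY; lia.
  - rewrite (_ : Y - 1 - j%:R = Y - (j.+1)%:R); last by rewrite -natr1; ring.
    apply: nzY; lia.
rewrite mulrDr tlem2 //; last first.
- by apply: nzY; lia.
- by apply: hvY.
rewrite -mulrDr; congr (_ * (_ + _ * _ / _)); rewrite /Y -!natr1; ring.
Qed.
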